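(* Assume the setting in the context. Let $\tilde M(i,i)$ be a simple $\tilde\Lambda$-module with $m_k\le i<m_{k+1}$ for some $1\le k\le r$. Then $\tilde M(i,i)$ is a cyclic simple module if and only if $i\equiv m_k\pmod{l_k}$ or $i\equiv m_k-1\pmod{l_k}$.
   Context: $\mathbf{k}$ a field, $n\ge2$. Setting: integers $0=m_1<\dots<m_{r+1}=m$, $l_k\ge2$, $\Lambda_k=\mathbf{k}A_{[m_k,m_{k+1}]}/R^{l_k}$ ($A_{[a,b]}$: vertices $a,\dots,b$, arrows $\alpha_t\colon t\to t-1$; $R$ the arrow ideal), each of global dimension $n$ and admitting an $n\mathbb{Z}$-cluster tilting subcategory (so $n$ is even, $l_k\mid m_{k+1}-m_k$, $n=2(m_{k+1}-m_k)/l_k$). $\Lambda=\Lambda_1\ast\cdots\ast\Lambda_r$ is the gluing (quotient of $\mathbf{k}A_{[0,m]}$ by the ideal generated by the $R^{l_k}$ on the pieces and $\alpha_{m_k}\alpha_{m_k+1}$, $2\le k\le r$), and $\tilde\Lambda$ its self-gluing $\mathbf{k}\tilde A_m/\tilde I$ ($\tilde A_m$: vertices $1,\dots,m$, arrows $\alpha_t\colon t\to t-1$, $\alpha_1\colon1\to m$; vertex $0$ identified with $m$; $\tilde I$ generated by the image of the ideal of $\Lambda$ and $\alpha_m\alpha_1$). $\tilde M(i,i)$ is the simple at vertex $i$ (mod $m$). The resolution quiver of $\tilde\Lambda$ has the simples as vertices and an arrow $S_i\to S_j$ iff $S_j\cong\tau\operatorname{soc}P_i$, where $P_i$ is the projective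 cover of $S_i$ and $\tau$ the Auslander–Reiten translation; a simple is cyclic if it lies on an oriented cycle of the resolution quiver. *)

(* Defs.v *)
From mathcomp Require Import all_boot.
Set Implicit Arguments. Unset Strict Implicit. Unset Printing Implicit Defensive.

(* Combinatorial model of the self-glued Nakayama algebra
   tilde Lambda = k tilde A_m / tilde I.
   Data: r pieces, mk : nat -> nat gives m_1,...,m_{r+1} (mk k for 1<=k<=r+1),
   l : nat -> nat gives l_1,...,l_r.  m := mk r.+1.
   Vertices of tilde A_m are the residues 0..m-1 mod m (0 standing for m).
   The arrow alpha_t : t -> t-1 (and alpha_1 : 1 -> m) is t |-> prv t. *)

Section SelfGluedNakayama.
Variables (r : nat) (mk l : nat -> nat).

Definition mtot := mk r.+1.

Definition prv (t : nat) : nat := (t + mtot - 1) %% mtot.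

Definition walk (s j : nat) : nat := iter j prv s.

(* Generating (monomial) relations of tilde I, a path being given by its
   start vertex and its length:
   - R^{l_k} on piece k: every path of length l_k inside A_[m_k, m_{k+1}],
     i.e. starting at some s with m_k + l_k <= s <= m_{k+1};
   - alpha_{m_k} alpha_{m_k+1} (2 <= k <= r) and alpha_m alpha_1 (k = 1):
     the path of length 2 starting at m_k + 1. *)
Definition is_relation (s L : nat) : Prop :=
  exists k, 1 <= k <= r /\
    ((L = l k /\ exists s0, mk k + l k <= s0 <= mk k.+1 /\ s = s0 %% mtot)
     \/ (L = 2 /\ s = (mk k).+1 %% mtot)).

(* a path (s, L) is zero in tilde Lambda iff it contains a relation *)
Definition zero_path (s L : nat) : Prop :=
  exists j L', j + L' <= L /\ is_relation (walk s j) L'.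

Definition nonzero_path (s L : nat) : Prop := ~ zero_path s L.

(* soc P_i = S_v : P_i is uniserial with basis the nonzero paths starting at i;
   its socle is the simple at the end vertex of the longest nonzero path. *)
Definition socle_proj (i v : nat) : Prop :=
  exists L, nonzero_path i L /\ ~ nonzero_path i L.+1 /\ v = walk i L.

(* tau S_v = S_w : for a Nakayama algebra, a non-projective simple S_v
   (i.e. rad P_v <> 0, i.e. the arrow at v is a nonzero path) has
   tau S_v = rad P_v / rad^2 P_v = S_{target of the arrow at v}. *)
Definition tau_simple (v w : nat) : Prop :=
  nonzero_path v 1 /\ w = prv v.

(* arrow S_i -> S_j of the resolution quiver: S_j = tau soc P_i *)
Definition res_arrow (i j : nat) : Prop :=
  exists v, socle_proj i v /\ tau_simple v j.

Inductive res_path : nat -> nat -> Prop :=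
  | res_path1 i j : res_arrow i j -> res_path i j
  | res_pathS i j h : res_arrow i j -> res_path j h -> res_path i h.

Definition cyclic_simple (i : nat) : Prop := res_path (i %% mtot) (i %% mtot).

End SelfGluedNakayama.

(* Main.v *)
From Stdlib Require Import ClassicalEpsilon Classical.
Require Import Defs.
From mathcomp Require Import all_boot zify.
Set Implicit Arguments. Unset Strict Implicit.

Definition Hyps r (mk l : nat -> nat) := [/\ 1 <= r, mk 1 = 0,
  (forall k, 1 <= k <= r -> mk k < mk k.+1) &
  (forall k, 1 <= k <= r -> 2 <= l k /\ l k %| mk k.+1 - mk k)].

Lemma mono_le r mk l : Hyps r mk l -> forall a b, 1 <= a <= b -> b <= r.+1 -> mk a <= mk b.
Proof.
case=> _ _ hm _ a; elim=> [|b IH]; first (timeout 15 lia).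
move=> hab hb; have [->|hne] := eqVneq a b.+1; first by [].
have := hm b; have := IH; (timeout 15 lia).
Qed.

Lemma mono_lt r mk l : Hyps r mk l -> forall a b, 1 <= a -> a < b -> b <= r.+1 -> mk a < mk b.
Proof.
move=> H a b h1 h2 h3; case: (H) => _ _ hm _.
case: b h2 h3 => [|b] h2 h3; first (timeout 15 lia).
have := @mono_le _ _ _ H (a) (b); have := hm b; (timeout 15 lia).
Qed.

Lemma piece_uniq r mk l : Hyps r mk l -> forall k k' t, 1 <= k <= r -> 1 <= k' <= r ->
  mk k < t <= mk k.+1 -> mk k' < t <= mk k'.+1 -> k = k'.
Proof.
move=> H k k' t hk hk' h1 h2.
case: (ltngtP k k') => // hkk.
- have := @mono_le _ _ _ H (k.+1) (k'); (timeout 15 lia).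
- have := @mono_le _ _ _ H (k'.+1) (k); (timeout 15 lia).
Qed.

Lemma piece_uniq2 r mk l : Hyps r mk l -> forall k k' t, 1 <= k <= r -> 1 <= k' <= r ->
  mk k <= t < mk k.+1 -> mk k' <= t < mk k'.+1 -> k = k'.
Proof.
move=> H k k' t hk hk' h1 h2.
case: (ltngtP k k') => // hkk.
- have := @mono_le _ _ _ H (k.+1) (k'); (timeout 15 lia).
- have := @mono_le _ _ _ H (k'.+1) (k); (timeout 15 lia).
Qed.

Lemma between r mk l : Hyps r mk l -> forall k k', 1 <= k <= r -> 1 <= k' <= r.+1 ->
  mk k < mk k' < mk k.+1 -> False.
Proof.
move=> H k k' hk hk' h.
case: (ltngtP k k') => hkk.
- have := @mono_le _ _ _ H (k.+1) (k'); (timeout 15 lia).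
- have := @mono_le _ _ _ H (k') (k); (timeout 15 lia).
- subst; (timeout 15 lia).
Qed.

Lemma m_pos r mk l : Hyps r mk l -> forall k, 1 <= k <= r -> mk k < mtot r mk.
Proof. move=> H k hk; rewrite /mtot; apply: mono_lt H _ _ _ _ _; (timeout 15 lia). Qed.

Lemma lk_le r mk l : Hyps r mk l -> forall k, 1 <= k <= r -> 2 <= l k <= mk k.+1 - mk k.
Proof.
move=> H k hk; case: (H) => _ _ hm hl; case: (hl k hk) => h2 hd.
have := dvdn_leq _ hd; have := hm k hk; (timeout 15 lia).
Qed.

Lemma modeq_1m m a b : 0 < a <= m -> 0 < b <= m -> a %% m = b %% m -> a = b.
Proof.
move=> ha hb.
have [->|hna] := eqVneq a m; have [->|hnb] := eqVneq b m => //.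
- rewrite modnn modn_small; (timeout 15 lia).
- rewrite modnn modn_small; (timeout 15 lia).
- rewrite !modn_small; (timeout 15 lia).
Qed.

Lemma walkE r mk s0 j : 0 < mtot r mk -> j <= mtot r mk + s0 ->
  walk r mk (s0 %% mtot r mk) j = (mtot r mk + s0 - j) %% mtot r mk.
Proof.
set m := mtot r mk => hm hj.
have -> : walk r mk (s0 %% m) j = (s0 + j * (m - 1)) %% m.
  elim: j hj => [|j IH] hj /=; first by rewrite addn0.
  rewrite /walk /= -/(walk r mk _ j) IH; last (timeout 15 lia).
  rewrite /prv -/m -addnBA // modnDml; congr (_ %% _); (timeout 15 lia).
have e : s0 + j * (m - 1) + m = j * m + (m + s0 - j) by nia.
transitivity ((s0 + j * (m - 1) + m) %% m); first by rewrite modnDr.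
by rewrite e modnMDl.
Qed.

Lemma top_le r mk l : Hyps r mk l -> forall k, 1 <= k <= r -> mk k.+1 <= mtot r mk.
Proof. move=> H k hk; rewrite /mtot; apply: (@mono_le _ _ _ H); (timeout 15 lia). Qed.

Lemma walkE2 r mk l s0 j : Hyps r mk l -> j <= s0 ->
  walk r mk (s0 %% mtot r mk) j = (s0 - j) %% mtot r mk.
Proof.
move=> H hj; have hm : 0 < mtot r mk.
  case: (H) => h1 _ _ _; have := @m_pos _ _ _ H 1; (timeout 15 lia).
rewrite walkE //; last (timeout 15 lia).
have -> : mtot r mk + s0 - j = (s0 - j) + mtot r mk by (timeout 15 lia).
by rewrite modnDr.
Qed.

Lemma NZ r mk l : Hyps r mk l -> forall k s0 L, 1 <= k <= r -> mk k < s0 <= mk k.+1 ->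
  L <= s0 - mk k -> L < l k -> nonzero_path r mk l (s0 %% mtot r mk) L.
Proof.
move=> H k s0 L hk hs hL1 hL2 [j [L' [hjL [k' [hk' hrel]]]]].
have hsm := top_le H hk.
have hm' := m_pos H hk'.
have hk'2 := lk_le H hk'.
rewrite (@walkE2 r mk l) in hrel; [|exact H|(timeout 15 lia)].
case: hrel => [[eL [t [ht ew]]] | [eL ew]].
- have ht2 := top_le H hk'.
  have et : s0 - j = t by apply: (modeq_1m _ _ ew); (timeout 15 lia).
  have ekk : k = k' by apply: (piece_uniq H hk hk' (t := t)); (timeout 15 lia).
  subst; (timeout 15 lia).
- have et : s0 - j = (mk k').+1 by apply: (modeq_1m _ _ ew); (timeout 15 lia).
  apply: (between H hk (k' := k')); (timeout 15 lia).
Qed.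

Lemma Z r mk l : Hyps r mk l -> forall k s0, 1 <= k <= r -> mk k < s0 <= mk k.+1 ->
  zero_path r mk l (s0 %% mtot r mk) (minn (s0 - mk k) (l k - 1)).+1.
Proof.
move=> H k s0 hk hs.
have hk2 := lk_le H hk.
case: (leqP (l k) (s0 - mk k)) => hc.
- exists 0, (l k); split; first (timeout 15 lia).
  exists k; split => //; left; split => //; exists s0; split; first (timeout 15 lia).
  by [].
- exists (s0 - mk k - 1), 2; split; first (timeout 15 lia).
  exists k; split => //; right; split => //.
  rewrite (@walkE2 r mk l) //; last (timeout 15 lia).
  congr (_ %% _); (timeout 15 lia).
Qed.

Definition Fk r (mk l : nat -> nat) k s0 :=
  if l k <= s0 - mk k then s0 - l k else (mtot r mk + mk k - 1) %% mtot r mk.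

Lemma zmono r mk l s a b : zero_path r mk l s a -> a <= b -> zero_path r mk l s b.
Proof. move=> [j [L' [h1 h2]]] hab; exists j, L'; split => //; (timeout 15 lia). Qed.

Lemma arrow_iff r mk l : Hyps r mk l -> forall k s0, 1 <= k <= r -> mk k < s0 <= mk k.+1 ->
  forall y, res_arrow r mk l (s0 %% mtot r mk) y <-> y = Fk r mk l k s0.
Proof.
move=> H k s0 hk hs y.
set L0 := minn (s0 - mk k) (l k - 1).
have hk2 := lk_le H hk.
have hsm := top_le H hk.
have nz : nonzero_path r mk l (s0 %% mtot r mk) L0 by apply: (NZ H hk hs); (timeout 15 lia).
have z := Z H hk hs.
have vl : walk r mk (s0 %% mtot r mk) L0.+1 = Fk r mk l k s0.
  rewrite walkE; last (timeout 15 lia); last (timeout 15 lia).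
  rewrite /Fk /L0; case: (leqP (l k) (s0 - mk k)) => hc.
  - have -> : mtot r mk + s0 - (minn (s0 - mk k) (l k - 1)).+1 = (s0 - l k) + mtot r mk by (timeout 15 lia).
    rewrite modnDr modn_small //; (timeout 15 lia).
  - congr (_ %% _); (timeout 15 lia).
split.
- move=> [v [[L [hnz [hz ev]]] [_ ew]]].
  have eL : L = L0.
    case: (ltngtP L L0) => // hc.
    + by case: nz; apply: zmono (NNPP _ hz) _.
    + by case: hnz; apply: zmono z _.
  subst; by rewrite -vl.
- move=> ->; exists (walk r mk (s0 %% mtot r mk) L0); split.
  + exists L0; split => //; split => //; by move=> /(_ z).
  + split; last by rewrite -vl.
    move=> [j [L' [h [k' [hk' rel]]]]].
    have := lk_le H hk'.
    by case: rel => [[eL _]|[eL _]]; (timeout 15 lia).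
Qed.

Definition Good r (mk l : nat -> nat) x := exists k s0, 1 <= k <= r /\ mk k < s0 <= mk k.+1 /\
  x = s0 %% mtot r mk /\ (l k %| s0 - mk k \/ l k %| s0.+1 - mk k).

Lemma mtot_gt0 r mk l : Hyps r mk l -> 0 < mtot r mk.
Proof. move=> H; case: (H) => h1 _ _ _; have := @m_pos _ _ _ H 1; (timeout 15 lia). Qed.

Lemma rep r mk l : Hyps r mk l -> forall t, 0 < t <= mtot r mk ->
  exists k, 1 <= k <= r /\ mk k < t <= mk k.+1.
Proof.
move=> H t ht; case: (H) => hr h1 _ _.
suff: forall b, 1 <= b <= r -> t <= mk b.+1 -> exists k, 1 <= k <= b /\ mk k < t <= mk k.+1.
  move=> /(_ r); rewrite /mtot in ht; case; [(timeout 15 lia)|(timeout 15 lia)|] => k hk; exists k; (timeout 15 lia).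
elim=> [|b IH] hb htb; first (timeout 15 lia).
case: b IH hb htb => [|b] IH hb htb; first by exists 1; rewrite h1; (timeout 15 lia).
case: (leqP t (mk b.+2)) => hc.
- case: (IH _ hc) => [|k hk]; first (timeout 15 lia). exists k; (timeout 15 lia).
- exists b.+2; (timeout 15 lia).
Qed.

Lemma rep_v r mk l : Hyps r mk l -> forall x, x < mtot r mk ->
  exists k s0, 1 <= k <= r /\ mk k < s0 <= mk k.+1 /\ x = s0 %% mtot r mk.
Proof.
move=> H x hx.
have hm := mtot_gt0 H.
case: (eqVneq x 0) => [->|hx0].
- case: (@rep _ _ _ H (mtot r mk)) => [|k hk]; first (timeout 15 lia).
  exists k, (mtot r mk); rewrite modnn; split; [(timeout 15 lia)|split; [(timeout 15 lia)|done]].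
- case: (@rep _ _ _ H x) => [|k hk]; first (timeout 15 lia).
  exists k, x; rewrite modn_small //; split; [(timeout 15 lia)|split; [(timeout 15 lia)|done]].
Qed.

Lemma Good_bottom r mk l : Hyps r mk l -> forall k, 1 <= k <= r -> Good r mk l (mk k).
Proof.
move=> H k hk; case: (H) => hr h1 hm hl.
case: k hk => [|[|k]] hk; first (timeout 15 lia).
- exists r, (mtot r mk); rewrite modnn h1; split; first (timeout 15 lia).
  have := hm r; rewrite /mtot; split; first (timeout 15 lia).
  split => //; left; by case: (hl r) => //; (timeout 15 lia).
- exists k.+1, (mk k.+2); split; first (timeout 15 lia).
  have := hm k.+1; split; first (timeout 15 lia).
  have hmm := @m_pos _ _ _ H k.+2; rewrite modn_small; last (timeout 15 lia).
  split => //; left; by case: (hl k.+1) => //; (timeout 15 lia).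
Qed.

Lemma Good_drop r mk l : Hyps r mk l -> forall k, 1 <= k <= r ->
  Good r mk l ((mtot r mk + mk k - 1) %% mtot r mk).
Proof.
move=> H k hk; case: (H) => hr h1 hm hl.
case: k hk => [|[|k]] hk; first (timeout 15 lia).
- have := @lk_le _ _ _ H r; rewrite /mtot => hlr.
  exists r, (mk r.+1 - 1); split; first (timeout 15 lia).
  split; first (timeout 15 lia).
  rewrite h1; split; first by congr (_ %% _); (timeout 15 lia).
  right; case: (hl r) => [|_]; first (timeout 15 lia).
  by have -> : (mk r.+1 - 1).+1 - mk r = mk r.+1 - mk r by (timeout 15 lia).
- have := @lk_le _ _ _ H k.+1 => hlr.
  exists k.+1, (mk k.+2 - 1); split; first (timeout 15 lia).
  split; first (timeout 15 lia).
  split.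
    have -> : mtot r mk + mk k.+2 - 1 = (mk k.+2 - 1) + mtot r mk by (timeout 15 lia).
    by rewrite modnDr.
  right; case: (hl k.+1) => [|_]; first (timeout 15 lia).
  by have -> : (mk k.+2 - 1).+1 - mk k.+1 = mk k.+2 - mk k.+1 by (timeout 15 lia).
Qed.

Lemma Good_closed r mk l : Hyps r mk l -> forall x y, Good r mk l x ->
  res_arrow r mk l x y -> Good r mk l y.
Proof.
move=> H x y [k [s0 [hk [hs [-> hd]]]]] /(arrow_iff H hk hs) ->.
have hk2 := lk_le H hk; have hsm := top_le H hk.
rewrite /Fk; case: leqP => hc; last exact: Good_drop.
case: (eqVneq (s0 - l k) (mk k)) => [->|hne]; first exact: Good_bottom.
exists k, (s0 - l k); split => //; split; first (timeout 15 lia).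
rewrite modn_small; last (timeout 15 lia); split => //.
case: hd => hd; [left|right].
- have -> : s0 - l k - mk k = (s0 - mk k) - l k by (timeout 15 lia).
  by rewrite dvdn_sub.
- have -> : (s0 - l k).+1 - mk k = (s0.+1 - mk k) - l k by (timeout 15 lia).
  by rewrite dvdn_sub.
Qed.

Lemma arrow_lt r mk l x y : Hyps r mk l -> res_arrow r mk l x y -> y < mtot r mk.
Proof. move=> H [v [_ [_ ->]]]; rewrite /prv ltn_pmod //; exact: mtot_gt0 H. Qed.

Lemma bad_step r mk l : Hyps r mk l -> forall x y, x < mtot r mk -> ~ Good r mk l x ->
  res_arrow r mk l x y -> Good r mk l y \/ y < x.
Proof.
move=> H x y hx hg.
case: (rep_v H hx) => k [s0 [hk [hs ex]]].
have hk2 := lk_le H hk; have hsm := top_le H hk.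
case: (H) => _ _ _ hl.
have hs0 : s0 < mk k.+1.
  case: (ltngtP s0 (mk k.+1)) => // e; try (timeout 15 lia).
  case: hg; exists k, s0; split => //; split => //; split => //; left.
  by rewrite e; case: (hl k hk).
have exs : x = s0 by rewrite ex modn_small; (timeout 15 lia).
rewrite ex => /(arrow_iff H hk hs) ->.
rewrite -ex exs /Fk; case: (leqP (l k) (s0 - mk k)) => hc.
- right; (timeout 15 lia).
- left; exact: (Good_drop H hk).
Qed.

Lemma arrow_fun r mk l : Hyps r mk l -> forall x y y', x < mtot r mk ->
  res_arrow r mk l x y -> res_arrow r mk l x y' -> y = y'.
Proof.
move=> H x y y' hx; case: (rep_v H hx) => k [s0 [hk [hs ->]]].
by move=> /(arrow_iff H hk hs) -> /(arrow_iff H hk hs) ->.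
Qed.

Lemma arrow_ex r mk l : Hyps r mk l -> forall x, x < mtot r mk ->
  exists y, res_arrow r mk l x y.
Proof.
move=> H x hx; case: (rep_v H hx) => k [s0 [hk [hs ->]]].
by exists (Fk r mk l k s0); apply/(arrow_iff H hk hs).
Qed.

Lemma good_cases (L s d : nat) : 2 <= L -> 0 < d -> (L %| d \/ L %| d.+1) -> d < L -> d = L - 1.
Proof.
move=> h2 hd [h|h] hl.
- have := dvdn_leq hd h; (timeout 15 lia).
- have := dvdn_leq (ltn0Sn d) h; (timeout 15 lia).
Qed.

Lemma good_cases2 (L a b : nat) : 2 <= L -> a < b -> (L %| b - a \/ L %| b.+1 - a) -> b - a < L -> b - a = L - 1.
Proof.
move=> h1 h2 h3 h4; apply: (@good_cases L 0) => //; first lia.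
by rewrite (_ : (b - a).+1 = b.+1 - a); last lia.
Qed.

Lemma dropE r mk l : Hyps r mk l -> forall k, 1 <= k <= r ->
  ((mtot r mk + mk k - 1) %% mtot r mk = mtot r mk - 1 /\ k = 1) \/
  ((mtot r mk + mk k - 1) %% mtot r mk = mk k - 1 /\ 2 <= k /\ 0 < mk k).
Proof.
move=> H k hk; case: (H) => hr h1 hm hl.
have hm0 := mtot_gt0 H; have hmk := m_pos H hk.
case: (eqVneq k 1) => [->|hk1].
- left; rewrite h1 addn0 modn_small; (timeout 15 lia).
- right; have := @mono_lt _ _ _ H 1 k; rewrite h1 => hpos.
  have -> : mtot r mk + mk k - 1 = (mk k - 1) + mtot r mk by (timeout 15 lia).
  rewrite modnDr modn_small; (timeout 15 lia).
Qed.

Lemma good_inj r mk l : Hyps r mk l -> forall x x' y, Good r mk l x -> Good r mk l x' ->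
  res_arrow r mk l x y -> res_arrow r mk l x' y -> x = x'.
Proof.
move=> H x x' y [k [s0 [hk [hs [-> hd]]]]] [k' [s1 [hk' [hs' [-> hd']]]]].
move=> /(arrow_iff H hk hs) -> /(arrow_iff H hk' hs').
have hk2 := lk_le H hk; have hsm := top_le H hk.
have hk2' := lk_le H hk'; have hsm' := top_le H hk'.
have hm0 := mtot_gt0 H.
move=> E; suff -> : s0 = s1 by []; move: E.
rewrite /Fk; case: (leqP (l k) (s0 - mk k)) => hc; case: (leqP (l k') (s1 - mk k')) => hc'.
- clear hd hd'; move=> e; have ekk : k = k' by apply: (piece_uniq2 H hk hk' (t := s0 - l k)); (timeout 15 lia).
  subst; (timeout 15 lia).
- clear hd hd'; case: (dropE H hk') => [[-> _]|[-> [h2 hp]]] e; first (timeout 15 lia).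
  exfalso; apply: (between H hk (k' := k')); (timeout 15 lia).
- clear hd hd'; case: (dropE H hk) => [[-> _]|[-> [h2 hp]]] e; first (timeout 15 lia).
  exfalso; apply: (between H hk' (k' := k)); (timeout 15 lia).
- have g0 := good_cases2 (ltac:(clear -hk2; lia) : 2 <= l k) (ltac:(clear -hs; lia) : mk k < s0) hd hc.
  have g1 := good_cases2 (ltac:(clear -hk2'; lia) : 2 <= l k') (ltac:(clear -hs'; lia) : mk k' < s1) hd' hc'.
  clear hd hd'.
  have hmk := m_pos H hk; have hmk' := m_pos H hk'.
  case: (dropE H hk) => [[-> e1]|[-> [h2 hp]]];
  case: (dropE H hk') => [[-> e1']|[-> [h2' hp']]] e; try (timeout 15 lia).
  + subst; (timeout 15 lia).
  + have ekk : k = k'.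
      case: (ltngtP k k') => // hkk.
      * have := @mono_lt _ _ _ H k k'; (timeout 15 lia).
      * have := @mono_lt _ _ _ H k' k; (timeout 15 lia).
    subst; (timeout 15 lia).
Qed.

Lemma path_iter r mk l (f : nat -> nat) :
  (forall x, x < mtot r mk -> f x < mtot r mk /\ res_arrow r mk l x (f x)) ->
  forall n a, a < mtot r mk -> res_path r mk l a (iter n.+1 f a).
Proof.
move=> hf; elim=> [|n IH] a ha; first by apply: res_path1; case: (hf a ha).
rewrite iterSr; case: (hf a ha) => h1 h2.
by apply: res_pathS h2 (IH _ h1).
Qed.

Definition goodb r mk l x : bool :=
  if excluded_middle_informative (Good r mk l x) then true else false.

Lemma goodbP r mk l x : goodb r mk l x <-> Good r mk l x.
Proof. by rewrite /goodb; case: excluded_middle_informative. Qed.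

Lemma periodic r mk l : Hyps r mk l -> forall i, i < mtot r mk -> Good r mk l i ->
  res_path r mk l i i.
Proof.
move=> H i hi hg.
have hm0 := mtot_gt0 H.
have fex : forall x, exists y, y < mtot r mk /\ (x < mtot r mk -> res_arrow r mk l x y).
  move=> x; case: (ltnP x (mtot r mk)) => hx.
  - case: (arrow_ex H hx) => y hy; exists y; split => //; exact: arrow_lt H hy.
  - by exists 0; split => //; lia.
pose f x := proj1_sig (constructive_indefinite_description _ (fex x)).
have fspec : forall x, f x < mtot r mk /\ (x < mtot r mk -> res_arrow r mk l x (f x)).
  move=> x; exact: (proj2_sig (constructive_indefinite_description _ (fex x))).
pose g : 'I_(mtot r mk) -> 'I_(mtot r mk) := fun x => Ordinal (proj1 (fspec x)).
pose S := [pred x : 'I_(mtot r mk) | goodb r mk l x].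
have f_in : {homo g : x / x \in S}.
  move=> x; rewrite !inE => /goodbP hx; apply/goodbP => /=.
  exact: Good_closed H _ _ hx ((proj2 (fspec x)) (ltn_ord x)).
have injf : {in S &, injective g}.
  move=> x y; rewrite !inE => /goodbP hx /goodbP hy e.
  apply: val_inj; apply: (good_inj H hx hy ((proj2 (fspec x)) (ltn_ord x))).
  have -> : f x = f y by have := congr1 val e.
  exact: ((proj2 (fspec y)) (ltn_ord y)).
pose xi : 'I_(mtot r mk) := Ordinal hi.
have xiS : xi \in S by rewrite inE; apply/goodbP.
have hit := iter_order_in f_in injf xiS.
have hval : forall n, val (iter n g xi) = iter n f i.
  by elim=> [|n IH] //=; rewrite IH.
have := order_gt0 g xi.
case: (order g xi) hit => [|p] hit // _.
have e : iter p.+1 f i = i by rewrite -hval hit.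
rewrite -{2}e; apply: (path_iter (f := f)) => // x hx.
by case: (fspec x) => h1 h2; split => //; apply: h2.
Qed.

Theorem lemma5p8 (n r : nat) (mk l : nat -> nat) :
  2 <= n ->
  1 <= r ->
  mk 1 = 0 ->
  (forall k, 1 <= k <= r -> mk k < mk k.+1) ->
  (forall k, 1 <= k <= r ->
     [/\ 2 <= l k, l k %| mk k.+1 - mk k & n = 2 * ((mk k.+1 - mk k) %/ l k)]) ->
  forall k i, 1 <= k <= r -> mk k <= i < mk k.+1 ->
    (cyclic_simple r mk l i <->
       (i = mk k %[mod l k] \/ i.+1 = mk k %[mod l k])).
Proof.
move=> h2n h1r h1 hm hl k i hk hi.
have H : Hyps r mk l.
  split => // k' hk'; by case: (hl k' hk').
have hm0 := mtot_gt0 H.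
have hsm := top_le H hk.
have him : i < mtot r mk by lia.
rewrite /cyclic_simple modn_small //.
split.
- move=> hp.
  have one : forall a y, res_arrow r mk l a y -> a < mtot r mk ->
      (Good r mk l a \/ a <= i) -> Good r mk l y \/ y < i.
    move=> a y ha hlt hq.
    case: (classic (Good r mk l a)) => g; first by left; exact: Good_closed H _ _ g ha.
    case: hq => [//|hle].
    case: (bad_step H hlt g ha) => [h|h]; [by left|right; lia].
  have key : forall a y, res_path r mk l a y -> a < mtot r mk ->
      (Good r mk l a \/ a <= i) -> Good r mk l y \/ y < i.
    move=> a y; elim => [a' y' ha|a' j h ha hp' IH] hlt hq.
    + exact: one ha hlt hq.
    + apply: IH; first exact: arrow_lt H ha.
      case: (one _ _ ha hlt hq) => [g|g]; [by left|right; lia].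
  case: (key _ _ hp him (or_intror (leqnn i))) => [g|]; last by rewrite ltnn.
  case: (eqVneq i (mk k)) => [->|hne]; first by left.
  case: g => k' [s0 [hk' [hs [ex hd]]]].
  have hsm' := top_le H hk'.
  have es : s0 = i.
    apply: (@modeq_1m (mtot r mk)); [lia|lia|].
    by rewrite -ex modn_small.
  subst s0.
  have ekk : k' = k by apply: (piece_uniq H hk' hk (t := i)); lia.
  subst k'.
  case: hd => hd; [left|right]; apply/eqP; rewrite eqn_mod_dvd //; lia.
- move=> hc; apply: (periodic H him).
  case: (eqVneq i (mk k)) => [e|hne]; first by rewrite e; apply: (Good_bottom H hk).
  exists k, i; split; first done.
  split; first lia.
  split; first by rewrite modn_small.
  case: hc => /eqP; rewrite eqn_mod_dvd; try lia; by [left|right].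
Qed.
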